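(* Let $p>1$ and let $\{(x_i,y_i)\}_{i=1}^n\subset\mathbb{R}^d\times\{\pm1\}$ be linearly separable with $\max_i\|x_i\|_q<C$ for some constant $C$, where $1/p+1/q=1$. Let $L(w)=\frac1n\sum_{i=1}^n\ell(y_i\langle w,x_i\rangle)$ with $\ell$ decreasing, convex, not attaining its minimum, $\inf\ell=0$, and suppose $\ell$ has an exponential tail: $\lim_{z\to\infty}\ell(z)e^{az}=b$ for some constants $a>0$, $b>0$. Then the regularized direction $\bar w^{\mathrm{reg}}_p$ with respect to the $\ell_p$-norm exists and equals the max-margin direction $\bar w^{\mathrm{mm}}_p$.
   Context: The regularization path is $\bar w_p(B)=\arg\min_{\|w\|_p\le B}L(w)$; if $\lim_{B\to\infty}\bar w_p(B)/B$ exists it is the regularized direction $\bar w^{\mathrm{reg}}_p$. The margin of $w$ is $\gamma(w)=\min_i y_i\langle x_i,w\rangle$, and the max-margin direction is $\bar w^{\mathrm{mm}}_p=\arg\max_{\|w\|_p\le1}\min_{i}y_i\langle x_i,w\rangle$. Linear separability means there is $w^*$ with $\mathrm{sign}(\langle w^*,x_i\rangle)=y_i$ for all $i$. *)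

(* Defs.v *)
From HB Require Import structures.
From mathcomp Require Import all_boot all_order all_algebra.
From mathcomp Require Import all_classical all_reals all_analysis.
Set Implicit Arguments. Unset Strict Implicit. Unset Printing Implicit Defensive.
Import Order.TTheory GRing.Theory Num.Theory.
Import numFieldNormedType.Exports.
Local Open Scope ring_scope.

Section Defs.
Variables (R : realType) (d n : nat).

Definition lpnorm (p : R) (w : 'rV[R]_d) : R :=
  (\sum_(j < d) `|w ord0 j| `^ p) `^ p^-1.

Definition dotp (w x : 'rV[R]_d) : R := \sum_(j < d) w ord0 j * x ord0 j.

Definition loss (ell : R -> R) (x : 'I_n -> 'rV[R]_d) (y : 'I_n -> R)
  (w : 'rV[R]_d) : R :=
  n%:R^-1 * \sum_(i < n) ell (y i * dotp w (x i)).

Definition lin_separable (x : 'I_n -> 'rV[R]_d) (y : 'I_n -> R) : Prop :=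
  exists ws : 'rV[R]_d, forall i, Num.sg (dotp ws (x i)) = y i.

Definition reg_minimizer (p : R) (ell : R -> R) (x : 'I_n -> 'rV[R]_d)
  (y : 'I_n -> R) (B : R) (w : 'rV[R]_d) : Prop :=
  lpnorm p w <= B /\
  forall v, lpnorm p v <= B -> loss ell x y w <= loss ell x y v.

Definition margin_ge (x : 'I_n -> 'rV[R]_d) (y : 'I_n -> R)
  (w : 'rV[R]_d) (g : R) : Prop :=
  forall i, g <= y i * dotp (x i) w.

(* w is (an element of) argmax_{||w||_p <= 1} min_i y_i <x_i, w>:
   gamma(w) >= gamma(v) for every v in the unit ball *)
Definition max_margin (p : R) (x : 'I_n -> 'rV[R]_d) (y : 'I_n -> R)
  (w : 'rV[R]_d) : Prop :=
  lpnorm p w <= 1 /\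
  forall v, lpnorm p v <= 1 ->
    forall g, margin_ge x y v g -> margin_ge x y w g.

End Defs.

(* Main.v *)
Require Import Defs.
From HB Require Import structures.
From mathcomp Require Import all_boot all_order all_algebra.
From mathcomp Require Import all_classical all_reals all_analysis.
From mathcomp Require Import ring lra.
Import Order.TTheory GRing.Theory Num.Theory.
Import numFieldNormedType.Exports.
Local Open Scope classical_set_scope.
Local Open Scope ring_scope.


Section Ell.
Variable R : realType.

Lemma ell_lip (ell : R -> R) :
  (forall z1 z2 : R, z1 < z2 -> ell z2 < ell z1) ->
  (forall (z1 z2 t : R), 0 <= t <= 1 ->
     ell (t * z1 + (1 - t) * z2) <= t * ell z1 + (1 - t) * ell z2) ->
  (forall z, 0 <= ell z) ->
  forall z t, `|z - t| <= 1 -> `|ell z - ell t| <= `|z - t| * ell (z - 1).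
Proof.
move=> Hdec Hcv H0.
have Hle : forall z1 z2, z1 <= z2 -> ell z2 <= ell z1.
  by move=> z1 z2; rewrite le_eqVlt => /predU1P[->//|/Hdec/ltW].
have A : forall z h, 0 <= h <= 1 -> ell z - ell (z + h) <= h * ell (z - 1).
  move=> z h /andP[h0 h1].
  have h1' : 0 < 1 + h by lra.
  have := Hcv (z - 1) (z + h) (h / (1 + h)).
  have -> : h / (1 + h) * (z - 1) + (1 - h / (1 + h)) * (z + h) = z.
    by field; exact: lt0r_neq0.
  have Ht : 0 <= h / (1 + h) <= 1.
    apply/andP; split; first by rewrite divr_ge0 // ltW.
    by rewrite ler_pdivrMr // mul1r; lra.
  move=> /(_ Ht) Hc.
  have Hq : h / (1 + h) <= h.
    by rewrite ler_pdivrMr //; nra.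
  have Ht0 := H0 (z + h).
  have Hz1 := H0 (z - 1).
  have : (1 - h / (1 + h)) * ell (z + h) <= ell (z + h).
    case/andP: Ht => Ht0' Ht1. nra.
  have : h / (1 + h) * ell (z - 1) <= h * ell (z - 1) by apply: ler_wpM2r.
  lra.
have B : forall z h, 0 <= h <= 1 -> ell (z - h) - ell z <= h * ell (z - 1).
  move=> z h Ht.
  have := Hcv (z - 1) z h.
  have -> : h * (z - 1) + (1 - h) * z = z - h by ring.
  move=> /(_ Ht) Hc.
  have := H0 z. case/andP: Ht => Hh0 Ht1. nra.
move=> z t Hzt.
have [zt|tz] := leP z t.
  have h0 : 0 <= t - z by rewrite subr_ge0.
  have E : t = z + (t - z) by ring.
  have Ht : 0 <= t - z <= 1 by rewrite h0 /=; move: Hzt; rewrite distrC ger0_norm.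
  have := A z (t - z) Ht. rewrite -E => HA.
  have := Hle _ _ zt.
  rewrite (distrC z t) (ger0_norm h0).
  move=> Hl; rewrite ger0_norm; [exact: HA| lra].
have h0 : 0 <= z - t by rewrite subr_ge0 ltW.
have E : t = z - (z - t) by ring.
have Ht : 0 <= z - t <= 1 by rewrite h0 /=; move: Hzt; rewrite ger0_norm.
have := B z (z - t) Ht. rewrite -E => HB.
have := Hle _ _ (ltW tz).
rewrite (ger0_norm h0) => Hl.
rewrite distrC ger0_norm; [exact: HB| lra].
Qed.

Lemma ell_cont (ell : R -> R) :
  (forall z1 z2 : R, z1 < z2 -> ell z2 < ell z1) ->
  (forall (z1 z2 t : R), 0 <= t <= 1 ->
     ell (t * z1 + (1 - t) * z2) <= t * ell z1 + (1 - t) * ell z2) ->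
  (forall z, 0 <= ell z) -> continuous ell.
Proof.
move=> Hdec Hcv H0 z.
apply/cvgrPdist_lt => e e0.
have K0 : 0 < ell (z - 1) + 1 by have := H0 (z - 1); lra.
apply/nbhs_normP; exists (Num.min 1 (e / (ell (z - 1) + 1))).
  by rewrite /= lt_min ltr01 divr_gt0.
move=> t /=; rewrite lt_min => /andP[H1 H2].
have L := @ell_lip ell Hdec Hcv H0 z t (ltW H1).
move: H2; rewrite ltr_pdivlMr // => H2.
have := H0 (z - 1). have := normr_ge0 (z - t). nra.
Qed.
End Ell.

Section Lp.
Variable R : realType.
Variable d : nat.
Variable p : R.
Hypothesis p1 : 1 < p.

Let p0 : 0 < p. Proof. by apply: lt_trans p1. Qed.

Lemma bern {a : R} : 0 <= a -> 1 + p * (a - 1) <= a `^ p.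
Proof.
move=> a0.
have pi1 : p^-1 < 1 by rewrite invf_lt1.
have pi0 : 0 < p^-1 by rewrite invr_gt0.
pose q := (1 - p^-1)^-1.
have q0 : 0 < q by rewrite /q invr_gt0 subr_gt0.
have pq : p^-1 + q^-1 = 1 by rewrite /q invrK; ring.
have := conjugate_powR a0 ler01 p0 q0 pq.
rewrite powR1 mulr1 /q invrK => H.
have : p * a <= p * (a `^ p / p + 1 * (1 - p^-1)) by rewrite ler_pM2l.
rewrite mulrDr mulrCA divff ?gt_eqF // mulr1 mul1r mulrBr divff ?gt_eqF // mulr1.
lra.
Qed.

Lemma tangent {m t : R} : 0 < m -> 0 <= t ->
  m `^ p + p * (m `^ p / m) * (t - m) <= t `^ p.
Proof.
move=> m0 t0.
have := bern (divr_ge0 t0 (ltW m0)).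
have mp : 0 < m `^ p by rewrite powR_gt0.
move=> /(ler_wpM2r (ltW mp)).
have tm0 : 0 <= t / m by rewrite divr_ge0 // ltW.
rewrite -(powRM p tm0 (ltW m0)) divfK ?gt_eqF //.
apply: le_trans; rewrite le_eqVlt; apply/orP; left; apply/eqP.
by field; rewrite gt_eqF.
Qed.

Lemma tangent_strict {m t : R} : 0 < m -> 0 <= t -> t != m ->
  m `^ p + p * (m `^ p / m) * (t - m) < t `^ p.
Proof.
move=> m0 t0 tm.
pose y := (t + m) / 2.
have y0 : 0 < y by rewrite /y; lra.
have H1 := tangent y0 t0.
have H2 := tangent m0 (ltW y0).
have ey : y `^ p / y = y `^ (p - 1).
  by rewrite -(mulr_powRB1 (ltW y0) p0); field; rewrite gt_eqF.
have em : m `^ p / m = m `^ (p - 1).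
  by rewrite -(mulr_powRB1 (ltW m0) p0); field; rewrite gt_eqF.
rewrite ey in H1; rewrite em in H2 *.
have pm1 : 0 < p - 1 by rewrite subr_gt0.
have [ym|my] : y < m \/ m < y.
  have : y != m.
    apply/eqP => E; move/eqP: tm; apply; rewrite /y in E; lra.
  by rewrite neq_lt => /orP[]; [left|right].
- have := gt0_ltr_powR pm1 (ltW y0 : 0 <= y) (ltW m0 : 0 <= m) ym => AM.
  have P : 0 < p * ((m - y) * (m `^ (p - 1) - y `^ (p - 1))).
    by rewrite mulr_gt0 // mulr_gt0 // subr_gt0.
  rewrite /y in H1 H2 ym P AM *. lra.
- have := gt0_ltr_powR pm1 (ltW m0 : 0 <= m) (ltW y0 : 0 <= y) my => AM.
  have P : 0 < p * ((y - m) * (y `^ (p - 1) - m `^ (p - 1))).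
    by rewrite mulr_gt0 // mulr_gt0 // subr_gt0.
  rewrite /y in H1 H2 my P AM *. lra.
Qed.

Lemma mid_strict {a b : R} : 0 <= a -> 0 <= b -> a != b ->
  ((a + b) / 2) `^ p < (a `^ p + b `^ p) / 2.
Proof.
move=> a0 b0 ab.
have m0 : 0 < (a + b) / 2.
  have : 0 < a + b.
    rewrite lt_neqAle addr_ge0 // andbT; apply/eqP => E.
    move/eqP: ab; apply; lra.
  lra.
have H1 := tangent_strict m0 a0 _.
have H2 := tangent_strict m0 b0 _.
have [am|am] := eqVneq a ((a + b) / 2).
  exfalso; move/eqP: ab; apply; lra.
have [bm|bm] := eqVneq b ((a + b) / 2).
  exfalso; move/eqP: ab; apply; lra.
move: (H1 am) (H2 bm).
set c := p * _.
lra.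
Qed.

Lemma mid_le {a b : R} : 0 <= a -> 0 <= b ->
  ((a + b) / 2) `^ p <= (a `^ p + b `^ p) / 2.
Proof.
move=> a0 b0; have [->|ab] := eqVneq a b.
  have -> : (b + b) / 2 = b by field.
  lra.
by apply/ltW/mid_strict.
Qed.

Lemma cont_sum (T : topologicalType) (I : Type) (F : I -> T -> R^o) (s : seq I) :
  (forall i, continuous (F i)) -> continuous (fun w => \sum_(j <- s) F j w).
Proof.
move=> H; elim: s => [|i s IH].
  under eq_fun do rewrite big_nil. exact: cst_continuous.
under eq_fun do rewrite big_cons.
by move=> w; apply: continuousD; [exact: H|exact: IH].
Qed.

Lemma cont_powabs (r : R) : 0 < r -> continuous (fun t : R => `|t| `^ r).
Proof.
move=> r0 t.
have [->|t0] := eqVneq t 0.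
  apply/cvgrPdist_lt => e e0.
  rewrite normr0 powR0 ?gt_eqF //.
  near=> s.
  rewrite sub0r normrN ger0_norm ?powR_ge0 //.
  have -> : e = (e `^ r^-1) `^ r by rewrite -powRrM mulVf ?gt_eqF // powRr1 // ltW.
  apply: gt0_ltr_powR => //; rewrite ?nnegrE ?powR_ge0 //.
  near: s.
  apply/nbhs_normP; exists (e `^ r^-1); first by rewrite /= powR_gt0.
  by move=> s /=; rewrite sub0r normrN.
have nt : 0 < `|t| by rewrite normr_gt0.
have E : {near t, (fun s : R => expR (r * ln `|s|)) =1 (fun s => `|s| `^ r)}.
  near=> s; rewrite /powR gt_eqF ?(mulrC r) //.
  near: s.
  apply/nbhs_normP; exists `|t|; first by [].
  move=> s /= Hs. rewrite normr_gt0; apply/eqP => s0; move: Hs.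
  by rewrite s0 subr0 ltxx.
apply: cvg_trans (near_eq_cvg E) _.
have -> : `|t| `^ r = expR (r * ln `|t|) by rewrite /powR gt_eqF ?(mulrC r).
apply: (continuous_comp (f := fun s : R => r * ln `|s|)); last exact: continuous_expR.
apply: continuousM; first exact: cvg_cst.
apply: (continuous_comp (f := fun s : R => `|s|)); first exact: norm_continuous.
exact: continuous_ln.
Unshelve. all: by end_near.
Qed.

Definition lpS (w : 'rV[R]_d) := \sum_(j < d) `|w ord0 j| `^ p.

Lemma lpS_ge0 (w : 'rV[R]_d) : 0 <= lpS w.
Proof. by apply: sumr_ge0 => j _; exact: powR_ge0. Qed.

Lemma lpS_term (w : 'rV[R]_d) j : `|w ord0 j| `^ p <= lpS w.
Proof.
rewrite /lpS (bigD1 j) //= lerDl; apply: sumr_ge0 => i _; exact: powR_ge0.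
Qed.

Lemma lpnorm_ge0 (w : 'rV[R]_d) : 0 <= lpnorm p w.
Proof. exact: powR_ge0. Qed.

Lemma lpnorm_pow (w : 'rV[R]_d) : lpnorm p w `^ p = lpS w.
Proof. by rewrite /lpnorm -powRrM mulVf ?gt_eqF // powRr1 // lpS_ge0. Qed.

Lemma lpnorm_leP (w : 'rV[R]_d) B : 0 <= B -> (lpnorm p w <= B <-> lpS w <= B `^ p).
Proof.
move=> B0; split => H.
  rewrite -lpnorm_pow; apply: ge0_ler_powR => //; [exact: ltW|exact: lpnorm_ge0].
have : lpS w `^ p^-1 <= (B `^ p) `^ p^-1.
  apply: ge0_ler_powR => //; [by rewrite invr_ge0 ltW|exact: lpS_ge0|exact: powR_ge0].
by rewrite -powRrM mulfV ?gt_eqF // powRr1.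
Qed.

Lemma lpnorm_lt1 (w : 'rV[R]_d) : lpS w < 1 -> lpnorm p w < 1.
Proof.
have pi0 : 0 < p^-1 by rewrite invr_gt0.
move=> H; have := gt0_ltr_powR pi0 (lpS_ge0 w : lpS w \in Num.nneg) (ler01 : (0:R) <= 1) H.
by rewrite powR1.
Qed.

Lemma lpnorm_coord (w : 'rV[R]_d) B j : lpnorm p w <= B -> `|w ord0 j| <= B.
Proof.
move=> H.
have B0 : 0 <= B by apply: le_trans H; exact: lpnorm_ge0.
move/(lpnorm_leP w B B0): H => H.
rewrite leNgt; apply/negP => Hlt.
have := gt0_ltr_powR p0 (B0 : B \in Num.nneg) (normr_ge0 _ : `|w ord0 j| \in Num.nneg) Hlt.
have := lpS_term w j. lra.
Qed.

Lemma lpnormZ c (w : 'rV[R]_d) : lpnorm p (c *: w) = `|c| * lpnorm p w.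
Proof.
rewrite /lpnorm /lpS.
have -> : \sum_(j < d) `|(c *: w) ord0 j| `^ p = `|c| `^ p * \sum_(j < d) `|w ord0 j| `^ p.
  rewrite mulr_sumr; apply: eq_bigr => j _.
  by rewrite mxE normrM powRM.
rewrite powRM ?powR_ge0 //; last exact: lpS_ge0.
by rewrite -powRrM mulfV ?gt_eqF // powRr1.
Qed.

Lemma lpnorm_eq0 (w : 'rV[R]_d) : lpnorm p w = 0 -> w = 0.
Proof.
move=> H; have : lpnorm p w <= 0 by rewrite H.
move=> H0; apply/rowP => j; rewrite mxE.
have := lpnorm_coord w 0 j H0. by rewrite normr_le0 => /eqP.
Qed.


Lemma lpnorm_mid (u v : 'rV[R]_d) : lpnorm p u <= 1 -> lpnorm p v <= 1 -> u != v ->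
  lpnorm p (2^-1 *: (u + v)) < 1.
Proof.
move=> /(lpnorm_leP u 1 ler01) Hu /(lpnorm_leP v 1 ler01) Hv uv.
rewrite powR1 in Hu Hv.
apply: lpnorm_lt1.
have [j uvj] : exists j, u ord0 j != v ord0 j.
  apply: contrapT => H; move/eqP: uv; apply; apply/rowP => j.
  apply/eqP/negPn/negP => Hj; apply: H; by exists j.
have term : forall i, `|(2^-1 *: (u + v)) ord0 i| `^ p <=
    (`|u ord0 i| `^ p + `|v ord0 i| `^ p) / 2.
  move=> i; apply: le_trans (mid_le (normr_ge0 _) (normr_ge0 _)).
  apply: (ge0_ler_powR (ltW p0)); rewrite ?nnegrE ?normr_ge0 ?divr_ge0 ?addr_ge0 //.
  rewrite !mxE normrM ger0_norm ?invr_ge0 // mulrC.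
  by rewrite ler_pM2r ?invr_gt0 // ler_normD.
have strict : `|(2^-1 *: (u + v)) ord0 j| `^ p <
    (`|u ord0 j| `^ p + `|v ord0 j| `^ p) / 2.
  have [E|NE] := eqVneq `|u ord0 j| `|v ord0 j|; last first.
    apply: le_lt_trans (mid_strict (normr_ge0 _) (normr_ge0 _) NE).
    apply: (ge0_ler_powR (ltW p0)); rewrite ?nnegrE ?normr_ge0 ?divr_ge0 ?addr_ge0 //.
    rewrite !mxE normrM ger0_norm ?invr_ge0 // mulrC.
    by rewrite ler_pM2r ?invr_gt0 // ler_normD.
  have S0 : u ord0 j + v ord0 j = 0.
    have : (u ord0 j + v ord0 j) * (u ord0 j - v ord0 j) = 0.
      have E2 : u ord0 j ^+ 2 = v ord0 j ^+ 2.
        by rewrite -(real_normK (num_real (u ord0 j))) E real_normK // num_real.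
      by rewrite mulrC -subr_sqr E2 subrr.
    by move/eqP; rewrite mulf_eq0 subr_eq0 (negbTE uvj) orbF => /eqP.
  rewrite !mxE S0 mulr0 normr0 powR0 ?gt_eqF // -E.
  have : 0 < `|u ord0 j| `^ p.
    apply: powR_gt0; rewrite normr_gt0; apply/eqP => u0.
    move/eqP: uvj; apply; rewrite u0 in S0 *; lra.
  lra.
have : lpS (2^-1 *: (u + v)) < (lpS u + lpS v) / 2.
  rewrite /lpS -big_split /= mulr_suml.
  rewrite (bigD1 j) //= [X in _ < X](bigD1 j) //=.
  apply: ltr_leD; first exact: strict.
  by apply: ler_sum => i _; apply: term.
lra.
Qed.

Lemma lpS_cont : continuous lpS.
Proof.
apply: cont_sum => j w.
apply: (continuous_comp (f := fun w : 'rV[R]_d => w ord0 j) (g := fun t : R => `|t| `^ p)).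
  exact: coord_continuous.
exact: cont_powabs.
Qed.

Lemma ball_compact B : 0 <= B -> compact [set w : 'rV[R]_d | lpnorm p w <= B].
Proof.
move=> B0; apply: bounded_closed_compact.
  rewrite /= /bounded_near; near=> M => w /= Hw.
  rewrite [X in X <= _]/Num.norm /= mx_normrE.
  apply: bigmax_le; first by [].
  move=> [i j] _ /=.
  rewrite (ord1 i); apply: le_trans (lpnorm_coord w B j Hw) _.
  near: M; apply: filterS (nbhs_pinfty_gt (num_real B)) => M; exact: ltW.
have -> : [set w : 'rV[R]_d | lpnorm p w <= B] = lpS @^-1` [set r | r <= B `^ p].
  by apply/seteqP; split => w /=; move/(lpnorm_leP w B B0).
apply: preimage_closed; last exact: closed_le.
by move=> w _; apply: lpS_cont.
Unshelve. all: by end_near.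
Qed.

End Lp.



Section Dot.
Context {R : realType}.
Context {d : nat}.

Lemma dotpC (v w : 'rV[R]_d) : dotp v w = dotp w v.
Proof. by apply: eq_bigr => j _; rewrite mulrC. Qed.

Lemma dotpZr (v w : 'rV[R]_d) c : dotp v (c *: w) = c * dotp v w.
Proof.
rewrite /dotp mulr_sumr; apply: eq_bigr => j _; rewrite mxE; ring.
Qed.

Lemma dotpDr (v w1 w2 : 'rV[R]_d) : dotp v (w1 + w2) = dotp v w1 + dotp v w2.
Proof.
rewrite /dotp -big_split; apply: eq_bigr => j _ /=; by rewrite mxE mulrDr.
Qed.

Lemma dotp0r (v : 'rV[R]_d) : dotp v 0 = 0.
Proof. by rewrite /dotp big1 // => j _; rewrite mxE mulr0. Qed.

Lemma dotp_cont (v : 'rV[R]_d) : continuous (fun w => dotp v w).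
Proof.
apply: cont_sum => j w.
apply: continuousM; first exact: cst_continuous.
exact: (@coord_continuous _ 1 d ord0 j).
Qed.

Lemma dotp_contl (v : 'rV[R]_d) : continuous (fun w => dotp w v).
Proof.
have E : (fun w => dotp w v) = (fun w => dotp v w).
  by apply: funext => w; rewrite dotpC.
rewrite E; exact: dotp_cont.
Qed.
End Dot.

Section Fmin.
Context {R : realType}.

Definition fmin {I : Type} (F : I -> R) (a : R) (s : seq I) :=
  foldr (fun i acc => Num.min (F i) acc) a s.

Lemma fmin_le (I : eqType) (F : I -> R) a s i : i \in s -> fmin F a s <= F i.
Proof.
elim: s => [//|j s IH]; rewrite inE => /orP[/eqP ->|H] /=.
  by rewrite ge_min lexx.
by rewrite ge_min IH ?orbT.
Qed.

Lemma fmin_att (I : Type) (F : I -> R) a s :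
  fmin F a s = a \/ exists i, fmin F a s = F i.
Proof.
elim: s => [|j s IH] /=; first by left.
have [H|H] := leP (F j) (fmin F a s).
  by right; exists j.
exact: IH.
Qed.

Lemma fmin_cont (T : topologicalType) (I : Type) (G : I -> T -> R^o) (g0 : T -> R^o) s :
  continuous g0 -> (forall i, continuous (G i)) ->
  continuous (fun w => fmin (fun i => G i w) (g0 w) s).
Proof.
move=> H0 HG; elim: s => [//|j s IH] /= w.
exact: (continuous_min (HG j w) (IH w)).
Qed.
End Fmin.


Lemma final_arith {R : realType} {n L1 L2 E1 D b : R} : 0 < n -> 0 < E1 -> 0 < b -> 3 * n <= D ->
  L1 <= n * L2 -> b / 2 < L1 * E1 -> L2 * (E1 * D) < 3 * b / 2 -> False.
Proof.
move=> n0 E0 b0 D3 H1 H2 H3.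
have D0 : 0 < D by lra.
have P1 : L1 * (E1 * D) <= n * L2 * (E1 * D) by apply: ler_wpM2r => //; apply/ltW/mulr_gt0.
have P2 : n * (L2 * (E1 * D)) < n * (3 * b / 2) by rewrite ltr_pM2l.
have P3 : b / 2 * D < L1 * E1 * D by rewrite ltr_pM2r.
have P4 : b / 2 * (3 * n) <= b / 2 * D by rewrite ler_pM2l // divr_gt0.
lra.
Qed.
Lemma gapL {R : realType} {b t : R} : b - t < b / 2 -> b / 2 < t.
Proof. move=> *; lra. Qed.
Lemma gapR {R : realType} {b t : R} : t - b < b / 2 -> t < 3 * b / 2.
Proof. move=> *; lra. Qed.



Lemma mid_ge {R : realType} {g gc a b : R} : g <= gc -> gc <= a -> g <= b -> g <= 2^-1 * (a + b).
Proof. move=> *; lra. Qed.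

Lemma hhalf_gt0 {R : realType} {g : R} : 0 < g -> 0 < g / 2.
Proof. move=> *; lra. Qed.
Lemma hhalf_lt {R : realType} {g : R} : 0 < g -> g / 2 < g.
Proof. move=> *; lra. Qed.

Section Main.
Variables (R : realType) (d n : nat) (p : R) (x : 'I_n -> 'rV[R]_d) (y : 'I_n -> R) (i0 : 'I_n).
Hypothesis p1 : 1 < p.

Let lpZ := @lpnormZ R d p p1.
Let bc := @ball_compact R d p p1.
Let lmid := @lpnorm_mid R d p p1.
Let leq0 := @lpnorm_eq0 R d p p1.
Let lge0 := @lpnorm_ge0 R d p.

Definition fm i w := y i * dotp (x i) w.
Definition gam w := fmin (fun i => fm i w) (fm i0 w) (enum 'I_n).

Lemma gam_le w i : gam w <= fm i w.
Proof. by apply: fmin_le; rewrite mem_enum. Qed.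

Lemma gam_att (w : 'rV[R]_d) : exists i : 'I_n, gam w = fm i w.
Proof. by rewrite /gam; case: (@fmin_att _ _ (fun i => fm i w) (fm i0 w) (enum 'I_n)) => [->|]; [exists i0|]. Qed.

Lemma fm_cont i : continuous (fm i).
Proof.
move=> w; apply: continuousM; first exact: cst_continuous.
exact: dotp_cont.
Qed.

Lemma gam_cont : continuous gam.
Proof. by apply: fmin_cont; [exact: fm_cont|move=> i; exact: fm_cont]. Qed.

Lemma margin_geP w g : margin_ge x y w g <-> g <= gam w.
Proof.
split => [H|H i]; last by apply: le_trans H (gam_le _ _).
by case: (gam_att w) => i ->; apply: H.
Qed.

Lemma fmZ i c w : fm i (c *: w) = c * fm i w.
Proof. by rewrite /fm dotpZr; ring. Qed.

Lemma fmD i v w : fm i (v + w) = fm i v + fm i w.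
Proof. by rewrite /fm dotpDr; ring. Qed.

Lemma lpnorm0 : lpnorm p (0 : 'rV[R]_d) = 0.
Proof. by have := lpZ 0 0; rewrite scale0r normr0 mul0r. Qed.

Lemma ex_maxmargin : exists wmm, max_margin p x y wmm.
Proof.
have A0 : [set w : 'rV[R]_d | lpnorm p w <= 1] !=set0.
  by exists 0; rewrite /= lpnorm0 ler01.
have cg : {within [set w : 'rV[R]_d | lpnorm p w <= 1], continuous gam}.
  by apply: continuous_subspaceT; exact: gam_cont.
have [c cA cmax] := EVT_max_rV A0 (bc 1 ler01) cg.
exists c; split; first by move: cA; rewrite in_setE.
move=> v Hv g /margin_geP Hg; apply/margin_geP.
apply: le_trans Hg (cmax v _); by rewrite in_setE.
Qed.

Hypothesis hy : forall i, y i = 1 \/ y i = -1.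
Hypothesis hsep : lin_separable x y.

Lemma y_ne0 i : y i != 0.
Proof. by case: (hy i) => ->; rewrite ?oppr_eq0 oner_eq0. Qed.

Lemma fm0 i : fm i 0 = 0.
Proof. by rewrite /fm dotp0r mulr0. Qed.

Lemma gam_pos wmm : max_margin p x y wmm -> 0 < gam wmm.
Proof.
move=> [Hw1 Hmm].
case: hsep => ws Hws.
have ws0 : ws != 0.
  apply/eqP => E; have H := Hws i0; rewrite E dotpC dotp0r sgr0 in H.
  by move/eqP: (y_ne0 i0); rewrite -H.
have N0 : 0 < lpnorm p ws.
  rewrite lt_neqAle lge0 andbT; apply/eqP => E.
  by move/eqP: ws0; apply; apply: leq0; rewrite E.
set N := lpnorm p ws in N0.
pose u := N^-1 *: ws.
have u1 : lpnorm p u <= 1.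
  have Ni0 : 0 <= N^-1 by rewrite invr_ge0; exact: ltW.
  by rewrite /u lpZ (ger0_norm Ni0) mulVf ?gt_eqF.
have fpos : forall i, 0 < fm i ws.
  move=> i; rewrite /fm dotpC; have := Hws i.
  set t := dotp ws (x i).
  case: (ltrgt0P t) => [tp|tn|t0].
  - by rewrite gtr0_sg // => <-; rewrite mul1r.
  - by rewrite ltr0_sg // => <-; rewrite mulN1r oppr_gt0.
  - by rewrite t0 sgr0 => E; move/eqP: (y_ne0 i); rewrite -E.
have gu : 0 < gam u.
  case: (gam_att u) => j ->; rewrite /u fmZ mulr_gt0 //; first by rewrite invr_gt0.
have := Hmm u u1 (gam u) (proj2 (margin_geP u (gam u)) (lexx _)).
move/margin_geP => H; exact: lt_le_trans gu H.
Qed.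

Lemma key wmm e : max_margin p x y wmm -> 0 < e ->
  exists g1, 0 < g1 /\ g1 < gam wmm /\
    forall w, lpnorm p w <= 1 -> g1 < gam w -> `|wmm - w| < e.
Proof.
move=> Hmm e0.
have gs0 := gam_pos wmm Hmm.
case: Hmm => Hw1 Hmm.
pose K := [set w : 'rV[R]_d | lpnorm p w <= 1] `&` [set w | e <= `|wmm - w|].
case: (pselect (K !=set0)) => [K0|K0]; last first.
  exists (gam wmm / 2); split; first exact: hhalf_gt0.
  split; first exact: hhalf_lt.
  move=> w w1 _; rewrite ltNge; apply/negP => Hw; apply: K0; by exists w.
have cK : compact K.
  apply: compact_closedI; first exact: (bc 1 ler01).
  have -> : [set w | e <= `|wmm - w|] = (fun w : 'rV[R]_d => `|wmm - w|) @^-1` [set r | e <= r].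
    by [].
  apply: preimage_closed; last exact: closed_ge.
  move=> w _.
  apply: (continuous_comp (f := fun w : 'rV[R]_d => wmm - w) (g := Num.norm)).
    by apply: continuousB; [exact: cst_continuous|exact: cvg_id].
  exact: norm_continuous.
have cg : {within K, continuous gam}.
  by apply: continuous_subspaceT; exact: gam_cont.
have [c cK' cmax] := EVT_max_rV K0 cK cg.
move: cK'; rewrite in_setE => -[c1 ce].
have gc : gam c < gam wmm.
  rewrite ltNge; apply/negP => Hc.
  have cw : c != wmm.
    apply/eqP => E; move: ce => /=; rewrite E subrr normr0 => H; move: (lt_le_trans e0 H); by rewrite ltxx.
  pose m := 2^-1 *: (c + wmm).
  have m1 := lmid c wmm c1 Hw1 cw.
  have fmm : forall i, gam wmm <= fm i m.
    move=> i; rewrite /m fmZ fmD.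
    exact: (mid_ge Hc (gam_le c i) (gam_le wmm i)).
  have m0 : m != 0.
    apply/eqP => E; have := fmm i0; rewrite E fm0 => H; move: (lt_le_trans gs0 H); by rewrite ltxx.
  have N0 : 0 < lpnorm p m.
    rewrite lt_neqAle lge0 andbT; apply/eqP => E.
    by move/eqP: m0; apply; apply: leq0; rewrite E.
  set N := lpnorm p m in N0 m1.
  pose u := N^-1 *: m.
  have u1 : lpnorm p u <= 1.
    have Ni0 : 0 <= N^-1 by rewrite invr_ge0; exact: ltW.
  by rewrite /u lpZ (ger0_norm Ni0) mulVf ?gt_eqF.
  have mu : margin_ge x y u (N^-1 * gam wmm).
    move=> i; rewrite -/(fm i u) /u fmZ; apply: ler_wpM2l; last exact: fmm.
    by rewrite invr_ge0 ltW.
  have := Hmm u u1 _ mu; move/margin_geP => H.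
  have Ni : 1 < N^-1 by rewrite (invf_gt1 N0); exact: m1.
  have X : 0 < (N^-1 - 1) * gam wmm by rewrite mulr_gt0 // subr_gt0.
  rewrite mulrBl mul1r subr_gt0 in X.
  by move: (lt_le_trans X H); rewrite ltxx.
exists (Num.max (gam c) (gam wmm / 2)); split.
  by rewrite lt_max; apply/orP; right; exact: hhalf_gt0.
split; first by rewrite gt_max gc /=; exact: hhalf_lt.
move=> w w1; rewrite gt_max => /andP[Hw _].
rewrite ltNge; apply/negP => Hwe.
have := cmax w; rewrite in_setE => /(_ (conj w1 Hwe)) H; move: (lt_le_trans Hw H); by rewrite ltxx.
Qed.

End Main.



Section Conv.
Variables (R : realType) (d n : nat) (p : R) (x : 'I_n -> 'rV[R]_d) (y : 'I_n -> R) (i0 : 'I_n).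
Variables (ell : R -> R) (a b : R).
Hypothesis p1 : 1 < p.
Hypothesis hy : forall i, y i = 1 \/ y i = -1.
Hypothesis hsep : lin_separable x y.
Hypothesis hdec : forall z1 z2 : R, z1 < z2 -> ell z2 < ell z1.
Hypothesis hconv : forall (z1 z2 t : R), 0 <= t <= 1 ->
     ell (t * z1 + (1 - t) * z2) <= t * ell z1 + (1 - t) * ell z2.
Hypothesis hpos : forall z, 0 <= ell z.
Hypothesis ha : 0 < a.
Hypothesis hb : 0 < b.
Hypothesis htail : (fun z => ell z * expR (a * z)) @ +oo --> b.

Let G := @gam R d n x y i0.
Let Fm := @fm R d n x y.
Let lpZ := @lpnormZ R d p p1.

Lemma n_gt0 : 0 < n%:R :> R.
Proof. by rewrite ltr0n (leq_ltn_trans (leq0n _) (ltn_ord i0)). Qed.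

Lemma ell_le z1 z2 : z1 <= z2 -> ell z2 <= ell z1.
Proof. by rewrite le_eqVlt => /predU1P[->//|/hdec/ltW]. Qed.

Lemma loss_cont : continuous (loss ell x y).
Proof.
have -> : loss ell x y = (fun w => n%:R^-1 * \sum_(i < n) ell (y i * dotp w (x i))) by [].
move=> w; apply: (continuousM (s := fun _ => n%:R^-1) (t := fun w => \sum_(i < n) ell (y i * dotp w (x i)))); first exact: cst_continuous.
move: w; apply: cont_sum => i w.
apply: (continuous_comp (f := fun w => y i * dotp w (x i)) (g := ell)).
  by apply: continuousM; [exact: cst_continuous| exact: dotp_contl].
exact: ell_cont.
Qed.

Lemma loss_le_term w j : n%:R^-1 * ell (y j * dotp w (x j)) <= loss ell x y w.
Proof.
rewrite /loss ler_wpM2l ?invr_ge0 ?ler0n // (bigD1 j) //= lerDl.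
by apply: sumr_ge0 => i _.
Qed.

Lemma loss_scaled_le w g B : 0 < B -> (forall i, g <= Fm i w) ->
  loss ell x y (B *: w) <= ell (B * g).
Proof.
move=> B0 Hg; rewrite /loss.
have : \sum_(i < n) ell (y i * dotp (B *: w) (x i)) <= \sum_(i < n) ell (B * g).
  apply: ler_sum => i _; apply: ell_le.
  rewrite dotpC dotpZr mulrCA ler_pM2l //; exact: Hg.
move=> H; rewrite sumr_const card_ord -mulr_natr in H.
have ni : 0 <= n%:R^-1 :> R by rewrite invr_ge0 ler0n.
apply: le_trans (ler_wpM2l ni H) _.
by rewrite mulrC mulfK // gt_eqF // n_gt0.
Qed.

Lemma conv wmm (wbar : R -> 'rV[R]_d) : max_margin p x y wmm ->
  (forall B : R, 0 < B -> reg_minimizer p ell x y B (wbar B)) ->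
  (fun B => B^-1 *: wbar B) @ +oo --> wmm.
Proof.
move=> Hmm Hbar.
have gs0 := @gam_pos R d n p x y i0 p1 hy hsep wmm Hmm.
apply/cvgrPdist_lt => e e0.
have [g1 [g10 [g1s Hk]]] := @key R d n p x y i0 p1 hy hsep wmm e Hmm e0.
have n0 := n_gt0.
move/cvgrPdist_lt: htail => /(_ (b / 2) (hhalf_gt0 hb)) T.
case: T => M [Mreal HM].
have HM' : forall z, M < z -> `|b - ell z * expR (a * z)| < b / 2.
  by move=> z Mz; apply: HM.
pose T0 := Num.max (Num.max 1 (M / g1 + 1)) (3 * n%:R / (a * (G wmm - g1))).
near=> B.
have BT : T0 < B.
  near: B; apply: nbhs_pinfty_gt; exact: num_real.
move: BT; rewrite /T0 !gt_max => /andP[/andP[B1 BM] Ba].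
have B0 : 0 < B by apply: lt_trans B1.
have [wB1 wBmin] := Hbar B B0.
have Bi0 : 0 <= B^-1 by rewrite invr_ge0; exact: ltW.
apply: Hk.
  rewrite lpZ (ger0_norm Bi0).
  apply: le_trans (ler_wpM2l Bi0 wB1) _.
  by rewrite mulVf // gt_eqF.
rewrite ltNge; apply/negP => Hle.
case: (@gam_att R d n x y i0 (B^-1 *: wbar B)) => j Ej.
rewrite Ej fmZ in Hle.
have Hj : Fm j (wbar B) <= B * g1.
  have := ler_wpM2l (ltW B0) Hle.
  by rewrite mulrA mulfV ?gt_eqF // mul1r.
have L1le : ell (B * g1) <= ell (Fm j (wbar B)) := ell_le _ _ Hj.
have Lterm := loss_le_term (wbar B) j.
rewrite dotpC in Lterm.
have lpB : lpnorm p (B *: wmm) <= B.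
  rewrite lpZ (ger0_norm (ltW B0)).
  have := ler_wpM2l (ltW B0) (proj1 Hmm).
  by rewrite mulr1.
have Lmin := wBmin (B *: wmm) lpB.
have Lup : loss ell x y (B *: wmm) <= ell (B * G wmm).
  apply: loss_scaled_le => // i; exact: gam_le.
have H1 : ell (B * g1) <= n%:R * ell (B * G wmm).
  have : n%:R^-1 * ell (B * g1) <= ell (B * G wmm).
    apply: le_trans Lup; apply: le_trans Lmin.
    apply: le_trans Lterm.
    by apply: ler_wpM2l => //; rewrite invr_ge0 ler0n.
  move=> /(ler_wpM2l (ltW n0)).
  by rewrite mulrA mulfV ?gt_eqF // mul1r.
have Mg1 : M < B * g1.
  have BM2 : M / g1 < B by apply: lt_trans BM; rewrite ltrDl.
  by rewrite ltr_pdivrMr in BM2.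
have Mgs : M < B * G wmm.
  apply: lt_le_trans Mg1 _; rewrite ler_pM2l //; exact: ltW.
have T1 := HM' _ Mg1.
have T2 := HM' _ Mgs.
have H2 : b / 2 < ell (B * g1) * expR (a * (B * g1)).
  have := ler_norm (b - ell (B * g1) * expR (a * (B * g1))).
  move: T1; set t := ell (B * g1) * expR (a * (B * g1)).
  move=> T1 T1'; exact: (gapL (le_lt_trans T1' T1)).
have dpos : 0 < G wmm - g1 by rewrite subr_gt0.
set D := expR (a * B * (G wmm - g1)).
have ED : expR (a * (B * G wmm)) = expR (a * (B * g1)) * D.
  by rewrite /D -expRD; congr expR; ring.
have H3 : ell (B * G wmm) * (expR (a * (B * g1)) * D) < 3 * b / 2.
  rewrite -ED.
  have := ler_norm (ell (B * G wmm) * expR (a * (B * G wmm)) - b).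
  rewrite distrC in T2.
  move: T2; set t := ell (B * G wmm) * expR (a * (B * G wmm)).
  move=> T2 T2'; exact: (gapR (le_lt_trans T2' T2)).
have D3 : 3 * n%:R <= D.
  apply: le_trans (expR_ge1Dx _); apply: ltW.
  move: Ba; rewrite ltr_pdivrMr ?mulr_gt0 // => Ba.
  apply: lt_le_trans Ba _.
  have -> : B * (a * (G wmm - g1)) = a * B * (G wmm - g1) by ring.
  by rewrite lerDr.
exact: (final_arith n0 (expR_gt0 _) hb D3 H1 H2 H3).
Unshelve. all: by end_near.
Qed.

End Conv.

Theorem proposition1 (R : realType) (d n : nat) (p q C a b : R)
  (x : 'I_n -> 'rV[R]_d) (y : 'I_n -> R) (ell : R -> R) :
  (0 < n)%N ->
  1 < p -> 0 < q -> p^-1 + q^-1 = 1 ->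
  (forall i, y i = 1 \/ y i = -1) ->
  lin_separable x y ->
  (forall i, lpnorm q (x i) < C) ->
  (* ell decreasing *)
  (forall z1 z2 : R, z1 < z2 -> ell z2 < ell z1) ->
  (* ell convex *)
  (forall (z1 z2 t : R), 0 <= t <= 1 ->
     ell (t * z1 + (1 - t) * z2) <= t * ell z1 + (1 - t) * ell z2) ->
  (* ell does not attain its minimum *)
  (forall z, exists z', ell z' < ell z) ->
  (* inf ell = 0 *)
  (forall z, 0 <= ell z) ->
  (forall e : R, 0 < e -> exists z, ell z < e) ->
  (* exponential tail *)
  0 < a -> 0 < b ->
  (fun z => ell z * expR (a * z)) @ +oo --> b ->
  (* conclusion *)
  (forall B : R, 0 < B -> exists w, reg_minimizer p ell x y B w) /\
  (exists wmm, max_margin p x y wmm) /\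
  (forall wmm, max_margin p x y wmm ->
   forall wbar : R -> 'rV[R]_d,
     (forall B : R, 0 < B -> reg_minimizer p ell x y B (wbar B)) ->
     (fun B => B^-1 *: wbar B) @ +oo --> wmm).
Proof.
move=> hn hp1 hq hpq hy hsep hC hdec hconv hnomin hpos hinf ha hb htail.
pose i0 : 'I_n := Ordinal hn.
split.
  move=> B B0.
  have A0 : [set w : 'rV[R]_d | lpnorm p w <= B] !=set0.
    by exists 0; rewrite /= (@lpnorm0 R d p hp1); exact: ltW.
  have cl : {within [set w : 'rV[R]_d | lpnorm p w <= B], continuous (loss ell x y)}.
    by apply: continuous_subspaceT; exact: (@loss_cont R d n x y ell hdec hconv hpos).
  have [c cA cmin] := EVT_min_rV A0 (@ball_compact R d p hp1 B (ltW B0)) cl.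
  exists c; split; first by move: cA; rewrite in_setE.
  by move=> v Hv; apply: cmin; rewrite in_setE.
split.
  exact: (@ex_maxmargin R d n p x y i0 hp1).
move=> wmm Hmm wbar Hbar.
exact: (@conv R d n p x y i0 ell a b hp1 hy hsep hdec hpos ha hb htail wmm wbar Hmm Hbar).
Qed.
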